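(* Let $\mathscr{A}$ be a $C^*$-algebra with identity such that the set $\mathscr{A}'_m$ of all linear multiplicative functionals $\varphi\colon\mathscr{A}\to\mathbb{C}$ is total (i.e., if $\varphi(a)=0$ for all $\varphi\in\mathscr{A}'_m$ then $a=0$). Let $\mathscr{X}$ be a right $\mathscr{A}$-module which is also a normed space. Let $n\geq 2$ and let $E, F\colon \mathscr{X}^n\to\mathscr{A}$ be multi-$\mathscr{A}$-linear functions, and assume that $E$ is bounded and strong. Suppose that for all $x_1,\dots,x_n\in\mathscr{X}$, $E(x_1,\dots,x_n)=0$ implies $F(x_1,\dots,x_n)=0$. Then the following are equivalent: (i) there exists $z\in\mathscr{X}$ such that both $E(z,\dots,z)$ and $F(z,\dots,z)$ belong to $G_{\mathscr{A}}$; (ii) for all $z_1,\dots,z_n\in\mathscr{X}$, $E(z_1,\dots,z_n)\in G_{\mathscr{A}}$ implies $F(z_1,\dots,z_n)\in G_{\mathscr{A}}$.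
   Context: $G_{\mathscr{A}}$ denotes the set of invertible elements of $\mathscr{A}$. A right $\mathscr{A}$-module $\mathscr{X}$ is a complex vector space with a right $\mathscr{A}$-action satisfying $(\alpha x)a=x(\alpha a)=\alpha(xa)$. A function $F\colon\mathscr{X}^n\to\mathscr{A}$ is multi-$\mathscr{A}$-linear if for all $x_1,\dots,x_n,y_j\in\mathscr{X}$, $\alpha\in\mathbb{C}$, $a\in\mathscr{A}$ and $j=1,\dots,n$: (A) $F$ is additive in the $j$-th variable; (B) $F(x_1,\dots,\alpha x_j a,\dots,x_n)=\alpha F(x_1,\dots,x_n)a$ if $j$ is even; (C) $F(x_1,\dots,\alpha x_j a,\dots,x_n)=\overline{\alpha}a^*F(x_1,\dots,x_n)$ if $j$ is odd. $F$ is bounded if there is $M$ with $\|F(x_1,\dots,x_n)\|\le M\|x_1\|\cdots\|x_n\|$ for all $x_i$. $F$ is strong if there exists $w\in\mathscr{X}$ with $F(w,w,\dots,w)\in G_{\mathscr{A}}$. *)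

(* Defs.v *)
From HB Require Import structures.
From mathcomp Require Import all_boot all_order all_algebra.
From mathcomp Require Import reals.
From mathcomp.real_closed Require Import complex.
Set Implicit Arguments. Unset Strict Implicit. Unset Printing Implicit Defensive.
Import Order.TTheory GRing.Theory Num.Theory.
Local Open Scope ring_scope.

Section Defs.
Variable R : realType.
Local Notation C := (R[i]).
Definition cabs (c : C) : R := ComplexField.Normc.normc c.
Definition cconj (c : C) : C := complex.conjc c.

Definition is_norm (V : lmodType C) (N : V -> R) : Prop :=
  [/\ forall x, 0 <= N x,
      forall x, N x = 0 -> x = 0,
      forall x y, N (x + y) <= N x + N y &
      forall (c : C) x, N (c *: x) = cabs c * N x].

Definition norm_complete (V : lmodType C) (N : V -> R) : Prop :=
  forall u : nat -> V,
    (forall e : R, 0 < e -> exists M : nat, forall m k, (M <= m)%N -> (M <= k)%N ->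
        N (u m - u k) < e) ->
    exists l : V, forall e : R, 0 < e -> exists M : nat, forall m, (M <= m)%N ->
        N (u m - l) < e.

Definition is_cstar_algebra (A : algType C) (star : A -> A) (N : A -> R) : Prop :=
  [/\ is_norm N, norm_complete N &
      forall a b : A, N (a * b) <= N a * N b] /\
  [/\ forall a b : A, star (a + b) = star a + star b,
      forall (c : C) (a : A), star (c *: a) = cconj c *: star a,
      forall a b : A, star (a * b) = star b * star a,
      forall a : A, star (star a) = a &
      forall a : A, N (star a * a) = N a ^+ 2].

Definition lin_mult_functional (A : algType C) (phi : A -> C) : Prop :=
  [/\ forall a b : A, phi (a + b) = phi a + phi b,
      forall (c : C) (a : A), phi (c *: a) = c * phi a &
      forall a b : A, phi (a * b) = phi a * phi b].

Definition mult_functionals_total (A : algType C) : Prop :=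
  forall a : A, (forall phi : A -> C, lin_mult_functional phi -> phi a = 0) -> a = 0.

Definition invertible (A : algType C) (a : A) : Prop :=
  exists b : A, a * b = 1 /\ b * a = 1.

Definition is_right_module (A : algType C) (X : lmodType C) (act : X -> A -> X) : Prop :=
  [/\ forall x y a, act (x + y) a = act x a + act y a,
      forall x a b, act x (a + b) = act x a + act x b,
      forall x a b, act x (a * b) = act (act x a) b,
      forall x, act x 1 = x &
      forall (c : C) x a, act (c *: x) a = act x (c *: a) /\
                          act x (c *: a) = c *: act x a].

Definition upd (X : Type) (n : nat) (x : 'I_n -> X) (j : 'I_n) (y : X) : 'I_n -> X :=
  fun k => if k == j then y else x k.

(* multi-A-linearity. Variables are indexed by 'I_n = {0,..,n-1}; the
   paper's j-th variable (1-based) is index j-1, so "j even" in the paper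
   means odd index here, "j odd" means even index. *)
Definition multi_A_linear (A : algType C) (star : A -> A) (X : lmodType C)
    (act : X -> A -> X) (n : nat) (F : ('I_n -> X) -> A) : Prop :=
  forall (x : 'I_n -> X) (j : 'I_n),
    [/\ forall y z : X, F (upd x j (y + z)) = F (upd x j y) + F (upd x j z),
        ~~ odd j -> forall (c : C) (a : A),
          F (upd x j (act (c *: x j) a)) = cconj c *: (star a * F x) &
        odd j -> forall (c : C) (a : A),
          F (upd x j (act (c *: x j) a)) = c *: (F x * a)].

Definition bounded_multi (A : algType C) (NA : A -> R) (X : lmodType C) (NX : X -> R)
    (n : nat) (F : ('I_n -> X) -> A) : Prop :=
  exists M : R, forall x : 'I_n -> X, NA (F x) <= M * \prod_(i < n) NX (x i).

Definition strong_multi (A : algType C) (X : lmodType C) (n : nat)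
    (F : ('I_n -> X) -> A) : Prop :=
  exists w : X, invertible (F (fun _ => w)).
End Defs.

(* Main.v *)
Require Import Defs.
From HB Require Import structures.
From mathcomp Require Import all_boot all_order all_algebra.
From mathcomp Require Import reals.
From mathcomp.real_closed Require Import complex.
From Stdlib Require Import FunctionalExtensionality.
From mathcomp Require Import zify.
Set Implicit Arguments. Unset Strict Implicit. Unset Printing Implicit Defensive.
Import Order.TTheory GRing.Theory Num.Theory.
Local Open Scope ring_scope.

Section Key.
Variables (A : pzRingType) (X : Type) (n : nat) (E H : ('I_n -> X) -> A).
Variables (w : X) (addX : X -> X -> X).
Hypothesis addE : forall x j y z, E (upd x j (addX y z)) = E (upd x j y) + E (upd x j z).
Hypothesis addH : forall x j y z, H (upd x j (addX y z)) = H (upd x j y) + H (upd x j z).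
Hypothesis Q : forall x j v, H x * E (upd x j v) = H (upd x j v) * E x.
Hypothesis canc : forall a : A, a * E (fun _ => w) = 0 -> a = 0.
Hypothesis Hw : H (fun _ => w) = 0.

Definition xT (x : 'I_n -> X) (T : {set 'I_n}) : 'I_n -> X :=
  fun i => if i \in T then w else x i.

Lemma xT_setT x : xT x setT = fun _ => w.
Proof. by apply: functional_extensionality => i; rewrite /xT inE. Qed.
Lemma xT_set0 x : xT x set0 = x.
Proof. by apply: functional_extensionality => i; rewrite /xT inE. Qed.
Lemma upd_xT x (T : {set 'I_n}) (k : 'I_n) (y : X) : k \notin T -> upd (xT x T) k y = xT (upd x k y) T.
Proof.
move=> kT; apply: functional_extensionality => i; rewrite /xT /upd.
by case: eqP => [->|]; rewrite ?(negbTE kT).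
Qed.
Lemma upd_xTw x (T : {set 'I_n}) (k : 'I_n) : upd (xT x T) k w = xT x (k |: T).
Proof.
apply: functional_extensionality => i; rewrite /xT /upd !inE.
by case: eqP.
Qed.
Lemma upd_id (z : 'I_n -> X) k : upd z k (z k) = z.
Proof. by apply: functional_extensionality => i; rewrite /upd; case: eqP => [->|]. Qed.
Lemma xT_at x (T : {set 'I_n}) (k : 'I_n) : k \notin T -> xT x T k = x k.
Proof. by rewrite /xT => /negbTE ->. Qed.

Lemma key_all : forall x, H x = 0.
Proof.
have C : forall m (T : {set 'I_n}), (n - #|T| <= m)%N -> forall x, H (xT x T) = 0.
  elim=> [|m IH] T hT x.
    have -> : T = setT.
      apply/eqP; rewrite eqEcard subsetT cardsT card_ord; lia.
    by rewrite xT_setT.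
  have [hm|hm] := leqP (n - #|T|) m; first exact: IH.
  have : T \proper setT by rewrite properEcard subsetT cardsT card_ord; lia.
  case/properP => _ [j _ jT].
  have IHk : forall (k : 'I_n) y, k \notin T -> H (xT y (k |: T)) = 0.
    move=> k y kT; apply: IH; rewrite cardsU1 kT; lia.
  have inner : forall s (V : {set 'I_n}), (j |: T) \subset V -> (#|V| <= #|T| + 1 + s)%N ->
      forall y, H (xT y T) * E (xT y V) = 0.
    elim=> [|s IHs] V sV cV y.
      have -> : V = j |: T.
        apply/eqP; rewrite eq_sym eqEcard sV cardsU1 jT; lia.
      by rewrite -upd_xTw Q upd_xTw IHk // mul0r.
    have [cV'|cV'] := leqP #|V| (#|T| + 1 + s); first exact: IHs.
    have : (j |: T) \proper V.
      by rewrite properEcard sV cardsU1 jT; lia.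
    case/properP => _ [k kV kjT].
    have kT : k \notin T by move: kjT; rewrite !inE negb_or => /andP[].
    set V' := V :\ k.
    have sV' : (j |: T) \subset V' by rewrite subsetD1 sV kjT.
    have kV' : k \notin V' by rewrite !inE eqxx.
    have cV'' : (#|V'| <= #|T| + 1 + s)%N.
      by move: cV (cardsD1 k V); rewrite kV /= -/V'; lia.
    have h1 := IHs V' sV' cV'' y.
    have h2 := IHs V' sV' cV'' (upd y k (addX (y k) w)).
    rewrite -!upd_xT // addH addE in h2.
    rewrite -{1}(xT_at y kT) -(xT_at y kV') !upd_id !upd_xTw in h2.
    rewrite setD1K // IHk // addr0 mulrDr h1 add0r in h2.
    exact: h2.
  have := inner n setT (subsetT _) _ x.
  rewrite cardsT card_ord xT_setT => /(_ ltac:(lia)).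
  exact: canc.
move=> x; rewrite -(xT_set0 x); apply: (C n); lia.
Qed.
End Key.

Lemma upd_upd (X : Type) n (x : 'I_n -> X) j a b : upd (upd x j a) j b = upd x j b.
Proof. by apply: functional_extensionality => i; rewrite /upd; case: eqP. Qed.
Lemma upd_at (X : Type) n (x : 'I_n -> X) j a : upd x j a j = a.
Proof. by rewrite /upd eqxx. Qed.

Lemma comm_of_total (R : realType) (A : algType R[i]) :
  mult_functionals_total A -> forall a b : A, a * b = b * a.
Proof.
move=> htot a b; apply/eqP; rewrite -subr_eq0; apply/eqP; apply: htot.
move=> phi [pD pZ pM].
by rewrite -scaleN1r pD pZ !pM mulN1r mulrC subrr.
Qed.

Lemma oneQ (R : realType) (A : algType R[i]) (star : A -> A)
  (X : lmodType R[i]) (act : X -> A -> X) n (E F : ('I_n -> X) -> A)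
  (comm : forall a b : A, a * b = b * a) (ss : forall a, star (star a) = a)
  (hE : multi_A_linear star act E) (hF : multi_A_linear star act F)
  (hEF : forall x : 'I_n -> X, E x = 0 -> F x = 0) :
  forall x j v, F x * E (upd x j v) = F (upd x j v) * E x.
Proof.
move=> x j v; set x' := upd x j v.
have ex' : x' j = v by rewrite /x' upd_at.
have ux' : forall z, upd x' j z = upd x j z by move=> z; rewrite /x' upd_upd.
case: (hE x j) => addE evE odE; case: (hF x j) => addF evF odF.
case: (hE x' j) => _ evE' odE'; case: (hF x' j) => _ evF' odF'.
case Hj: (odd j).
- set p := E x'; set q := E x.
  pose y := act (1 *: x j) p + act ((-1) *: x' j) q.
  have hy : E (upd x j y) = 0.
    rewrite addE odE // -ux' odE' // !scale1r scaleN1r -/p -/q comm subrr //.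
  have := hEF _ hy.
  rewrite addF odF // -ux' odF' // !scale1r scaleN1r => /eqP.
  by rewrite subr_eq0 => /eqP.
- have Hj' : ~~ odd j by rewrite Hj.
  set p := E x'; set q := E x.
  pose y := act (1 *: x j) (star p) + act ((-1) *: x' j) (star q).
  have hy : E (upd x j y) = 0.
    rewrite addE evE // -ux' evE' // !ss /cconj conjc1 rmorphN1 scale1r scaleN1r.
    by rewrite -/p -/q comm subrr.
  have := hEF _ hy.
  rewrite addF evF // -ux' evF' // !ss /cconj conjc1 rmorphN1 scale1r scaleN1r => /eqP.
  by rewrite subr_eq0 -/p -/q [p * _]comm [q * _]comm => /eqP.
Qed.

Lemma inv_mulC (R : realType) (A : algType R[i]) (comm : forall a b : A, a * b = b * a)
  (a b : A) : invertible a -> invertible b -> invertible (a * b).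
Proof.
move=> [a' [ha _]] [b' [hb _]]; exists (b' * a'); split.
  by rewrite mulrA -(mulrA a) hb mulr1 ha.
by rewrite comm mulrA -(mulrA a) hb mulr1 ha.
Qed.

Lemma inv_of_mulC (R : realType) (A : algType R[i]) (comm : forall a b : A, a * b = b * a)
  (a b : A) : invertible (a * b) -> invertible a.
Proof.
move=> [g [hg _]]; exists (b * g); split; first by rewrite mulrA.
by rewrite comm mulrA.
Qed.

Theorem corollary3p8 (R : realType) (A : algType R[i]) (star : A -> A) (NA : A -> R)
  (hA : is_cstar_algebra star NA) (htot : mult_functionals_total A)
  (X : lmodType R[i]) (act : X -> A -> X) (NX : X -> R)
  (hmod : is_right_module act) (hnorm : is_norm NX)
  (n : nat) (hn : (2 <= n)%N) (E F : ('I_n -> X) -> A)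
  (hE : multi_A_linear star act E) (hF : multi_A_linear star act F)
  (hEb : bounded_multi NA NX E) (hEs : strong_multi E)
  (hEF : forall x : 'I_n -> X, E x = 0 -> F x = 0) :
  (exists z : X, invertible (E (fun _ => z)) /\ invertible (F (fun _ => z))) <->
  (forall z : 'I_n -> X, invertible (E z) -> invertible (F z)).
Proof.
have comm := comm_of_total htot.
have ss : forall a, star (star a) = a by case: hA => _ [].
have Q := oneQ comm ss hE hF hEF.
split; last first.
  by move=> h; case: hEs => w hw; exists w; split => //; apply: h.
case=> z0 [[v [uv vu]] hFz0].
set u := E (fun _ => z0) in uv vu.
set c := F (fun _ => z0) in hFz0.
pose H x := F x * u - c * E x.
have addE : forall x j y z, E (upd x j (y + z)) = E (upd x j y) + E (upd x j z).
  by move=> x j y z; case: (hE x j) => ->.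
have addF : forall x j y z, F (upd x j (y + z)) = F (upd x j y) + F (upd x j z).
  by move=> x j y z; case: (hF x j) => ->.
have addH : forall x j y z, H (upd x j (y + z)) = H (upd x j y) + H (upd x j z).
  move=> x j y z; rewrite /H addE addF mulrDl mulrDr opprD addrACA //.
have QH : forall x j v, H x * E (upd x j v) = H (upd x j v) * E x.
  move=> x j w; rewrite /H !mulrBl -!mulrA [u * E (upd _ _ _)]comm.
  rewrite [u * E x]comm !mulrA Q.
  by rewrite -(mulrA c) [E x * _]comm mulrA.
have canc : forall a, a * E (fun _ => z0) = 0 -> a = 0.
  by move=> a ha; rewrite -[a]mulr1 -uv mulrA ha mul0r.
have Hw : H (fun _ => z0) = 0 by rewrite /H -/u -/c comm subrr.
have key := key_all addE addH QH canc Hw.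
move=> z hz.
have e : F z * u = c * E z by apply/eqP; rewrite -subr_eq0; apply/eqP; exact: key.
apply: (inv_of_mulC comm (b := u)); rewrite e.
exact: inv_mulC.
Qed.
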